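(* Let $\eta\in(0,1)$. For $N_S>0$, $\xi\in[0,1]$ let $$I(\xi;N_S)=4N_S\left\{\frac{1-\xi}{1-2\eta^2\left(\sqrt{\xi N_S(1+\xi N_S)}-\xi N_S\right)}+\frac{\xi\left[(1-\eta^2)^2+\eta^4\right]}{(1-\eta^2)\left(1+2\xi N_S\eta^2(1-\eta^2)\right)}\right\},$$ and for $\mathcal N_S>0$ and real $M\ge1$ let $\mathcal I(M;\mathcal N_S)=\max_{\xi\in[0,1]}M\,I(\xi;\mathcal N_S/M)$. Let $\bar N_S(\eta)=0$ if $\eta\le1/\sqrt2$, and for $\eta>1/\sqrt2$ let $\bar N_S(\eta)$ be the unique zero on $(0,\infty)$ of $N_S\mapsto\frac{1}{4N_S}\partial_\xi I(\xi;N_S)|_{\xi=1}$. Then there exists $\bar K(\eta)\ge0$ such that for every $\mathcal N_S>\bar K(\eta)$, $M=1$ maximizes $\mathcal I(\cdot;\mathcal N_S)$ over $M\in[1,\infty]$ (with $M=\infty$ understood as the limit $M\to\infty$). Moreover $\bar K(\eta)=0$ for $0<\eta\le1/\sqrt2$, and $\bar K(\eta)\ge\bar N_S(\eta)$ for $\eta>1/\sqrt2$.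
   Context: $I(\xi;N_S)$ is the quantum Fisher information for estimating the transmission $\eta$ of a pure-loss (zero-temperature) bosonic channel using one single-mode pure displaced squeezed probe with mean photon number $N_S$, fraction $\xi$ in squeezing and $1-\xi$ in displacement. With $M$ probes and total photon budget $\mathcal N_S=MN_S$, the total quantum Fisher information is $M\,I(\xi;\mathcal N_S/M)$, with $M$ relaxed to a continuous variable. *)

(* Defs.v *)
From Stdlib Require Import Reals.
From Coquelicot Require Import Coquelicot.
Open Scope R_scope.

Definition Iqfi (eta xi NS : R) : R :=
  4 * NS *
  ( (1 - xi) / (1 - 2 * eta ^ 2 * (sqrt (xi * NS * (1 + xi * NS)) - xi * NS))
  + xi * ((1 - eta ^ 2) ^ 2 + eta ^ 4)
      / ((1 - eta ^ 2) * (1 + 2 * xi * NS * eta ^ 2 * (1 - eta ^ 2)))).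

(* calI(M; NN) = max_{xi in [0,1]} M * I(xi; NN / M), written as the supremum
   (the max is attained: continuous function on a compact set). *)
Definition calI (eta M NN : R) : R :=
  real (Lub_Rbar (fun y => exists xi, 0 <= xi <= 1 /\ y = M * Iqfi eta xi (NN / M))).

Definition dI1 (eta NS : R) : R :=
  / (4 * NS) * Derive (fun xi => Iqfi eta xi NS) 1.

(* Main.v *)
Require Import Defs.
From Stdlib Require Import Reals Lra Psatz.
From Coquelicot Require Import Coquelicot.
Open Scope R_scope.

Definition Aa (eta y : R) := / (1 - 2 * eta ^ 2 * (sqrt (y * (1 + y)) - y)).
Definition Bb (eta y : R) :=
  ((1 - eta ^ 2) ^ 2 + eta ^ 4) / ((1 - eta ^ 2) * (1 + 2 * y * eta ^ 2 * (1 - eta ^ 2))).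

Lemma Iqfi_AB eta xi NS :
  Iqfi eta xi NS = 4 * NS * ((1 - xi) * Aa eta (xi * NS) + xi * Bb eta (xi * NS)).
Proof.
  unfold Iqfi, Aa, Bb. replace (2 * (xi * NS)) with (2 * xi * NS) by ring.
  unfold Rdiv. ring.
Qed.

Lemma h_bounds y : 0 <= y -> y <= sqrt (y * (1 + y)) < y + /2.
Proof.
  intros Hy. assert (Hs := sqrt_pos (y * (1 + y))).
  assert (Hss := sqrt_sqrt (y * (1 + y)) ltac:(nra)).
  split; nra.
Qed.

Lemma Aa_bounds eta y : 0 < eta < 1 -> 0 <= y -> 1 <= Aa eta y <= / (1 - eta ^ 2).
Proof.
  intros He Hy. unfold Aa. destruct (h_bounds y Hy).
  assert (0 < eta ^ 2 < 1) by (split; nra).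
  set (h := sqrt (y * (1 + y)) - y) in *.
  assert (0 <= h < /2) by (unfold h; lra).
  set (t := eta ^ 2) in *.
  assert (1 - t < 1 - 2 * t * h <= 1) by nra.
  split.
  - rewrite <- Rinv_1. apply Rinv_le_contravar; lra.
  - apply Rinv_le_contravar; lra.
Qed.

Lemma Bb_bounds eta y : 0 < eta < 1 -> 0 <= y ->
  0 <= Bb eta y <= ((1 - eta ^ 2) ^ 2 + eta ^ 4) / (1 - eta ^ 2).
Proof.
  intros He Hy. unfold Bb.
  assert (0 < eta ^ 2 < 1) by (split; nra).
  set (t := eta ^ 2) in *.
  assert (0 < (1 - t) ^ 2 + eta ^ 4) by (assert (0 < eta ^ 4) by (apply pow_lt; lra); nra).
  set (K := (1 - t) ^ 2 + eta ^ 4) in *.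
  assert (1 <= 1 + 2 * y * t * (1 - t)) by (assert (0 <= y * t * (1-t)) by (apply Rmult_le_pos; nra); nra).
  split.
  - apply Rlt_le, Rdiv_lt_0_compat; nra.
  - unfold Rdiv. apply Rmult_le_compat_l; [lra|].
    apply Rinv_le_contravar; nra.
Qed.

Lemma dI1_val eta N : 0 < eta < 1 -> 0 < N ->
  dI1 eta N = - Aa eta N + ((1 - eta ^ 2) ^ 2 + eta ^ 4) /
     ((1 - eta ^ 2) * (1 + 2 * N * eta ^ 2 * (1 - eta ^ 2)) ^ 2).
Proof.
  intros He HN.
  assert (0 < eta ^ 2 < 1) by (split; nra).
  destruct (h_bounds N) as [h1 h2]; [lra|].
  assert (HD : 1 - 2 * eta ^ 2 * (sqrt (N * (1 + N)) - N) > 0) by nra.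
  assert (Hs : 0 < sqrt (N * (1 + N))) by (apply sqrt_lt_R0; nra).
  assert (Hu : 0 < 1 + 2 * N * eta ^ 2 * (1 - eta ^ 2))
    by (assert (0 <= N * eta ^ 2 * (1 - eta ^ 2)) by (apply Rmult_le_pos; nra); nra).
  unfold dI1.
  rewrite (is_derive_unique _ _ (4 * N * (- Aa eta N + ((1 - eta ^ 2) ^ 2 + eta ^ 4) /
     ((1 - eta ^ 2) * (1 + 2 * N * eta ^ 2 * (1 - eta ^ 2)) ^ 2)))).
  - field. lra.
  - unfold Iqfi, Aa. auto_derive.
    all: replace (1 * N) with N by ring; replace (1 + - (1)) with 0 by ring.
    all: replace (eta * (eta * 1)) with (eta ^ 2) by ring.
    all: replace (eta * (eta * (eta * (eta * 1)))) with (eta ^ 4) by ring.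
    all: replace (2 * 1 * N) with (2 * N) by ring.
    all: replace (1 + - (2 * eta ^ 2 * (sqrt (N * (1 + N)) + - N))) with
      (1 - 2 * eta ^ 2 * (sqrt (N * (1 + N)) - N)) by ring.
    all: try (field; repeat split; nra).
    all: repeat split; try nra; apply Rmult_integral_contrapositive_currified; nra.
Qed.

Lemma lub_compare (E F : R -> Prop) :
  (exists x, E x) -> (exists b, forall x, F x -> x <= b) -> (exists x, F x) ->
  (forall x, E x -> exists y, F y /\ x <= y) ->
  real (Lub_Rbar E) <= real (Lub_Rbar F).
Proof.
  intros [x0 Hx0] [b Hb] [y0 Hy0] Hc.
  destruct (Lub_Rbar_correct F) as [HubF HlF].
  destruct (Lub_Rbar_correct E) as [HubE HlE].
  assert (H1 : Rbar_le (Lub_Rbar F) b) by (apply HlF; intros x Hx; simpl; apply Hb; auto).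
  assert (H2 := HubF y0 Hy0).
  destruct (Lub_Rbar F) as [r| |]; simpl in H1, H2; try contradiction.
  assert (H3 : Rbar_le (Lub_Rbar E) r).
  { apply HlE. intros x Hx. destruct (Hc x Hx) as [y [Fy Hxy]].
    simpl. specialize (HubF y Fy). simpl in HubF. lra. }
  assert (H4 := HubE x0 Hx0).
  destruct (Lub_Rbar E) as [r'| |]; simpl in H3, H4; try contradiction. simpl. auto.
Qed.

Lemma final_part eta NN : 0 < eta < 1 -> 0 < NN ->
  (forall M xi, 1 <= M -> 0 <= xi <= 1 ->
     exists xi', 0 <= xi' <= 1 /\ M * Iqfi eta xi (NN / M) <= Iqfi eta xi' NN) ->
  (forall M : R, 1 <= M -> calI eta M NN <= calI eta 1 NN) /\
  (forall l : Rbar, is_lim (fun M => calI eta M NN) p_infty l ->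
          Rbar_le l (calI eta 1 NN)).
Proof.
  intros He HNN Hc.
  assert (HM : forall M : R, 1 <= M -> calI eta M NN <= calI eta 1 NN).
  { intros M HM. unfold calI. apply lub_compare.
    - exists (M * Iqfi eta 0 (NN / M)). exists 0. split; [lra|auto].
    - exists (4 * NN * (/ (1 - eta ^ 2) + ((1 - eta ^ 2) ^ 2 + eta ^ 4) / (1 - eta ^ 2))).
      intros x [xi [Hxi ->]]. replace (NN / 1) with NN by field.
      rewrite Rmult_1_l, Iqfi_AB.
      assert (0 <= xi * NN) by nra.
      destruct (Aa_bounds eta (xi * NN)); auto.
      destruct (Bb_bounds eta (xi * NN)); auto.
      apply Rmult_le_compat_l; [lra|]. nra.
    - exists (1 * Iqfi eta 0 (NN / 1)). exists 0. split; [lra|auto].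
    - intros x [xi [Hxi ->]]. destruct (Hc M xi HM Hxi) as [xi' [Hxi' Hle]].
      exists (1 * Iqfi eta xi' (NN / 1)). split; [exists xi'; auto|].
      replace (NN / 1) with NN by field. lra. }
  split; auto.
  intros l Hl.
  apply (is_lim_le_loc (fun M => calI eta M NN) (fun _ => calI eta 1 NN) p_infty); auto.
  - exists 1. intros x Hx. apply HM. lra.
  - apply is_lim_const.
Qed.

Lemma compare eta NN M xi : 0 < eta < 1 -> 0 < NN -> 1 <= M -> 0 <= xi <= 1 ->
  M * Iqfi eta xi (NN / M) <= Iqfi eta (xi / M) NN \/
  (M * Iqfi eta xi (NN / M) <= 4 * NN * (((1 - eta ^ 2) ^ 2 + eta ^ 4) / (1 - eta ^ 2))
   /\ 1 < ((1 - eta ^ 2) ^ 2 + eta ^ 4) / (1 - eta ^ 2)).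
Proof.
  intros He HNN HM Hxi.
  assert (E1 : M * Iqfi eta xi (NN / M) =
     4 * NN * ((1 - xi) * Aa eta (xi * (NN / M)) + xi * Bb eta (xi * (NN / M)))).
  { rewrite Iqfi_AB. field. lra. }
  assert (E2 : Iqfi eta (xi / M) NN =
     4 * NN * ((1 - xi / M) * Aa eta (xi * (NN / M)) + xi / M * Bb eta (xi * (NN / M)))).
  { rewrite Iqfi_AB. replace (xi / M * NN) with (xi * (NN / M)) by (field; lra). ring. }
  rewrite E1, E2.
  assert (Hy : 0 <= xi * (NN / M)) by (apply Rmult_le_pos; [lra| apply Rlt_le, Rdiv_lt_0_compat; lra]).
  destruct (Aa_bounds eta _ He Hy). destruct (Bb_bounds eta _ He Hy).
  set (A := Aa eta (xi * (NN / M))) in *. set (B := Bb eta (xi * (NN / M))) in *.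
  assert (Hd : 0 <= xi / M <= xi).
  { split. apply Rmult_le_pos; [lra| apply Rlt_le, Rinv_0_lt_compat; lra].
    apply Rmult_le_reg_r with M; [lra|]. replace (xi / M * M) with xi by (field; lra). nra. }
  set (d := xi / M) in *.
  destruct (Rle_dec B A).
  - left. apply Rmult_le_compat_l; [lra|]. nra.
  - apply Rnot_le_lt in n. right. split.
    + apply Rmult_le_compat_l; [lra|]. nra.
    + lra.
Qed.

Lemma good_point eta NN : 0 < eta < 1 ->
  let t := eta ^ 2 in let q := (1 - t) ^ 2 + t ^ 2 in
  t ^ 3 / (4 * q * (1 - t) ^ 3) < NN ->
  exists xi0, 0 <= xi0 <= 1 /\
   4 * NN * (((1 - eta ^ 2) ^ 2 + eta ^ 4) / (1 - eta ^ 2)) <= Iqfi eta xi0 NN.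
Proof.
  intros He t q HNN.
  assert (Ht : 0 < t < 1) by (unfold t; split; nra).
  assert (Hq : 0 < q) by (unfold q; nra).
  assert (Hqt : q - t ^ 2 = (1 - t) ^ 2) by (unfold q; ring).
  set (S0 := t ^ 4 / (4 * q * (1 - t) ^ 2)).
  set (h1 := t ^ 2 / (2 * q)).
  assert (H1t2 : 0 < (1 - t) ^ 2) by (apply pow_lt; lra).
  assert (HS0 : 0 < S0) by (unfold S0; apply Rdiv_lt_0_compat; [apply pow_lt; lra|]; nra).
  assert (Hh1 : 0 < h1) by (unfold h1; apply Rdiv_lt_0_compat; nra).
  assert (HNS : S0 < NN * (t * (1 - t))).
  { apply Rle_lt_trans with (t ^ 3 / (4 * q * (1 - t) ^ 3) * (t * (1 - t))).
    - unfold S0. right. field; repeat split; nra.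
    - apply Rmult_lt_compat_r; nra. }
  assert (HX : 0 < t ^ 3 / (4 * q * (1 - t) ^ 3)).
  { assert (0 < (1 - t) ^ 3) by (apply pow_lt; lra).
    apply Rdiv_lt_0_compat; [apply pow_lt; lra|]; nra. }
  assert (HNN0 : 0 < NN) by lra.
  assert (HS0N : S0 <= NN) by nra.
  assert (Hsq : sqrt (S0 * (1 + S0)) = S0 + h1).
  { replace (S0 * (1 + S0)) with ((S0 + h1) * (S0 + h1)).
    - apply sqrt_square. lra.
    - unfold S0, h1, q. field; repeat split; nra. }
  exists (S0 / NN). split.
  { split. apply Rlt_le, Rdiv_lt_0_compat; lra.
    apply Rmult_le_reg_r with NN; [lra|]. replace (S0 / NN * NN) with S0 by (field; lra). lra. }
  rewrite Iqfi_AB. replace (S0 / NN * NN) with S0 by (field; lra).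
  assert (HS0' : 0 <= S0) by lra.
  destruct (Bb_bounds eta S0 He HS0').
  assert (HA : Aa eta S0 = q / (q - t ^ 3)).
  { unfold Aa. rewrite Hsq. fold t. replace (S0 + h1 - S0) with h1 by ring.
    unfold h1. field. split; [|lra]. unfold q. nra. }
  rewrite HA.
  assert (Hq3 : q - t ^ 3 = (1 - t) * (1 - t + t ^ 2)) by (unfold q; ring).
  assert (Hpos : 0 < 1 - t + t ^ 2) by nra.
  assert (HK : (1 - eta ^ 2) ^ 2 + eta ^ 4 = q) by (unfold q, t; ring).
  rewrite HK. fold t.
  assert (0 <= S0 / NN) by (apply Rlt_le, Rdiv_lt_0_compat; lra).
  assert (Hmain : 4 * NN * (q / (1 - t)) <= 4 * NN * ((1 - S0 / NN) * (q / (q - t ^ 3)))).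
  { replace (4 * NN * ((1 - S0 / NN) * (q / (q - t ^ 3)))) with
      (4 * (NN - S0) * q / (q - t ^ 3)) by (field; repeat split; nra).
    replace (4 * NN * (q / (1 - t))) with (4 * NN * q * (1 - t + t^2) / (q - t ^ 3))
      by (rewrite Hq3; field; repeat split; nra).
    unfold Rdiv. apply Rmult_le_compat_r.
    - apply Rlt_le, Rinv_0_lt_compat. nra.
    - assert (NN * (1 - t + t ^ 2) <= NN - S0) by nra. nra. }
  assert (0 <= S0 / NN * Bb eta S0) by (apply Rmult_le_pos; lra).
  assert (0 <= 4 * NN * (S0 / NN * Bb eta S0)) by (apply Rmult_le_pos; lra).
  rewrite Rmult_plus_distr_l. lra.
Qed.

Lemma sqrt2_cmp eta : 0 < eta -> (eta <= / sqrt 2 <-> eta ^ 2 <= / 2).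
Proof.
  intros He.
  assert (Hs2 : sqrt 2 * sqrt 2 = 2) by (apply sqrt_sqrt; lra).
  assert (Hs : 0 < sqrt 2) by (apply sqrt_lt_R0; lra).
  assert (Hr : / sqrt 2 * / sqrt 2 = / 2) by (rewrite <- Rinv_mult, Hs2; reflexivity).
  assert (0 < / sqrt 2) by (apply Rinv_0_lt_compat; lra).
  split; intros; nra.
Qed.

Theorem proposition6 (eta : R) (Heta : 0 < eta < 1) :
  exists Kbar : R,
    0 <= Kbar /\
    (eta <= / sqrt 2 -> Kbar = 0) /\
    (/ sqrt 2 < eta ->
       forall Nbar : R, 0 < Nbar -> dI1 eta Nbar = 0 -> Nbar <= Kbar) /\
    (forall NN : R, Kbar < NN ->
       (forall M : R, 1 <= M -> calI eta M NN <= calI eta 1 NN) /\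
       (forall l : Rbar, is_lim (fun M => calI eta M NN) p_infty l ->
          Rbar_le l (calI eta 1 NN))).
Proof.
  assert (Ht : 0 < eta ^ 2 < 1) by (split; nra).
  assert (Hc1 : 1 < ((1 - eta ^ 2) ^ 2 + eta ^ 4) / (1 - eta ^ 2) -> / 2 < eta ^ 2).
  { intros H. apply Rmult_lt_compat_r with (r := 1 - eta ^ 2) in H; [|lra].
    unfold Rdiv in H. rewrite Rmult_assoc, Rinv_l in H by lra. nra. }
  destruct (Rle_dec eta (/ sqrt 2)) as [Hle | Hgt].
  - exists 0. split; [lra|]. split; [auto|]. split; [intros; lra|].
    intros NN HNN. apply final_part; auto.
    intros M xi HM Hxi.
    destruct (compare eta NN M xi Heta HNN HM Hxi) as [H | [_ H]].
    + exists (xi / M). split; auto.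
      split. apply Rmult_le_pos; [lra| apply Rlt_le, Rinv_0_lt_compat; lra].
      apply Rmult_le_reg_r with M; [lra|]. replace (xi / M * M) with xi by (field; lra). nra.
    + apply (sqrt2_cmp eta) in Hle; [|lra]. apply Hc1 in H. lra.
  - apply Rnot_le_lt in Hgt.
    set (t := eta ^ 2).
    set (c := ((1 - eta ^ 2) ^ 2 + eta ^ 4) / (1 - eta ^ 2)).
    set (q := (1 - t) ^ 2 + t ^ 2).
    assert (Htt : / 2 < t).
    { unfold t. destruct (Rle_dec (eta ^ 2) (/2)) as [h|h]; [|apply Rnot_le_lt; auto].
      apply (sqrt2_cmp eta) in h; lra. }
    assert (Hq : 0 < q) by (unfold q; nra).
    assert (Hcq : c = q / (1 - t)) by (unfold c, q, t; f_equal; ring).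
    assert (Hc : 1 < c).
    { rewrite Hcq. apply Rmult_lt_reg_r with (1 - t); [unfold t; lra|].
      unfold Rdiv. rewrite Rmult_assoc, Rinv_l by (unfold t; lra). unfold q. nra. }
    assert (Ha : 0 < t * (1 - t)) by (unfold t; nra).
    set (K1 := (c - 1) / (2 * (t * (1 - t)))).
    set (K2 := t ^ 3 / (4 * q * (1 - t) ^ 3)).
    assert (HK2 : 0 < K2).
    { assert (0 < (1 - t) ^ 3) by (apply pow_lt; unfold t; lra).
      unfold K2. apply Rdiv_lt_0_compat; [apply pow_lt; unfold t; lra|]; nra. }
    exists (Rmax K1 K2).
    assert (HK2m := Rmax_r K1 K2). assert (HK1m := Rmax_l K1 K2).
    split; [lra|]. split; [intros; lra|]. split.
    + intros _ N HN HdI. rewrite dI1_val in HdI by auto.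
      destruct (Aa_bounds eta N Heta) as [HA _]; [lra|].
      set (u := 1 + 2 * N * eta ^ 2 * (1 - eta ^ 2)) in *.
      assert (Hu : 1 <= u).
      { unfold u. assert (0 <= N * eta ^ 2 * (1 - eta ^ 2)) by (apply Rmult_le_pos; nra). nra. }
      assert (E : ((1 - eta ^ 2) ^ 2 + eta ^ 4) / ((1 - eta ^ 2) * u ^ 2) = c / u ^ 2)
        by (unfold c; field; split; nra).
      rewrite E in HdI.
      assert (Hcu : u ^ 2 <= c).
      { assert (H : 1 <= c / u ^ 2) by lra.
        apply Rmult_le_compat_r with (r := u ^ 2) in H; [|nra].
        unfold Rdiv in H. rewrite Rmult_assoc, Rinv_l in H by nra. nra. }
      assert (N <= K1).
      { unfold K1. apply Rmult_le_reg_r with (2 * (t * (1 - t))); [lra|].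
        replace ((c - 1) / (2 * (t * (1 - t))) * (2 * (t * (1 - t)))) with (c - 1) by (field; unfold t; repeat split; nra).
        unfold u in Hcu. fold t in Hcu. nra. }
      lra.
    + intros NN HNN. assert (HNN0 : 0 < NN) by lra. apply final_part; auto.
      intros M xi HM Hxi.
      destruct (compare eta NN M xi Heta HNN0 HM Hxi) as [H | [H _]].
      * exists (xi / M). split; auto.
        split. apply Rmult_le_pos; [lra| apply Rlt_le, Rinv_0_lt_compat; lra].
        apply Rmult_le_reg_r with M; [lra|]. replace (xi / M * M) with xi by (field; lra). nra.
      * pose proof (good_point eta NN Heta) as HG. cbv zeta in HG.
        assert (HK2N : K2 < NN) by lra.
        destruct (HG HK2N) as [xi0 [Hxi0 Hg]].
        exists xi0. split; auto. lra.
Qed.
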